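(* If $G$ is a tree with $|V(G)| \ge 3$, then $\det(G) = \det'(G)$.
   Context: A vertex subset $S$ of $G$ is a vertex determining set if the only automorphism of $G$ fixing every vertex of $S$ is the identity; the determining number $\det(G)$ is the minimum size of a vertex determining set. For a graph $G$ with at most one isolated vertex and no component isomorphic to $K_2$, an edge subset $T$ is an edge determining set if the only automorphism $\phi$ of $G$ satisfying $\{\phi(u),\phi(v)\}=\{u,v\}$ for all $\{u,v\}\in T$ is the identity; the determining index $\det'(G)$ is the minimum size of an edge determining set. *)

(* Defs.v *)
From mathcomp Require Import all_boot all_fingroup.
Set Implicit Arguments. Unset Strict Implicit. Unset Printing Implicit Defensive.

Definition simple_graph (T : finType) (e : rel T) : Prop :=
  symmetric e /\ irreflexive e.

Definition connected_graph (T : finType) (e : rel T) : Prop :=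
  forall x y : T, connect e x y.

Definition has_cycle (T : finType) (e : rel T) : Prop :=
  exists (x : T) (p : seq T),
    [/\ 2 <= size p, path e x p, uniq (x :: p) & e (last x p) x].

Definition is_tree (T : finType) (e : rel T) : Prop :=
  simple_graph e /\ connected_graph e /\ ~ has_cycle e.

Definition is_aut (T : finType) (e : rel T) (phi : {perm T}) : bool :=
  [forall x : T, forall y : T, e (phi x) (phi y) == e x y].

Definition vdet_set (T : finType) (e : rel T) (S : {set T}) : bool :=
  [forall phi : {perm T},
     (is_aut e phi && [forall x in S, phi x == x]) ==> (phi == 1%g)].

Definition det_number (T : finType) (e : rel T) : nat :=
  \big[minn/#|T|]_(S : {set T} | vdet_set e S) #|S|.

Definition is_edge (T : finType) (e : rel T) (A : {set T}) : bool :=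
  [exists u : T, exists v : T, e u v && (A == [set u; v])].

Definition edet_set (T : finType) (e : rel T) (D : {set {set T}}) : bool :=
  [forall A in D, is_edge e A] &&
  [forall phi : {perm T},
     (is_aut e phi &&
      [forall u : T, forall v : T,
         ([set u; v] \in D) ==> ([set phi u; phi v] == [set u; v])])
     ==> (phi == 1%g)].

Definition det_index (T : finType) (e : rel T) : nat :=
  \big[minn/#|{set T}|]_(D : {set {set T}} | edet_set e D) #|D|.

(* Main.v *)
Require Import Defs.
From mathcomp Require Import all_boot all_fingroup zify.
Set Implicit Arguments. Unset Strict Implicit. Unset Printing Implicit Defensive.

Section Restr.
Variables (T : finType) (e : rel T) (P : pred T).
Definition restr := [rel u v | [&& e u v, P u & P v]].
Lemma restr_sym : symmetric e -> symmetric restr.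
Proof. by move=> es u v; rewrite /= es; case: (P u); case: (P v); rewrite ?andbF. Qed.
Lemma path_restr z s : path e z s -> all P (z :: s) -> path restr z s.
Proof.
elim: s z => [|b s IH] z //= /andP[ezb pb] /and3P[Pz Pb As].
by rewrite ezb Pz Pb /=; apply: IH => //=; rewrite Pb.
Qed.
Lemma restr_path z s : path restr z s -> path e z s /\ all P s.
Proof.
elim: s z => [|b s IH] z //= /andP[/and3P[ezb Pz Pb] pb].
by have [-> ->] := IH _ pb; rewrite ezb Pb.
Qed.
End Restr.

Section Tree.
Variables (T : finType) (e : rel T).
Hypotheses (esym : symmetric e) (eirr : irreflexive e)
  (econn : forall x y, connect e x y) (enocyc : ~ has_cycle e).

Definition upath x p y := [&& path e x p, uniq (x :: p) & last x p == y].

Lemma upath_ex x y : exists p, upath x p y.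
Proof.
have /connectP[p pp ->] := econn x y.
case: (shortenP pp) => q qp qu _.
by exists q; rewrite /upath qp qu eqxx.
Qed.

Lemma upath_uniq p q x y : upath x p y -> upath x q y -> p = q.
Proof.
elim: p q x => [|a p IH] [|b q] x /and3P[pp up /eqP lp] /and3P[pq uq /eqP lq] //.
- move: lp uq => /= lp; rewrite -lp in lq => /andP[/negP nx _]; case: nx.
  by rewrite -[in X in X \in _]lq /= mem_last.
- move: lq up => /= lq; rewrite -lq in lp => /andP[/negP nx _]; case: nx.
  by rewrite -[in X in X \in _]lp /= mem_last.
case: (eqVneq a b) => [ab|neq].
  subst b; congr (_ :: _); apply: (IH q a).
    by rewrite /upath; move: pp up lp => /= /andP[_ ->] /andP[_ ->] ->; rewrite eqxx.
  by rewrite /upath; move: pq uq lq => /= /andP[_ ->] /andP[_ ->] ->; rewrite eqxx.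
exfalso; apply: enocyc.
set P := fun u => u != x.
have hp : path (restr e P) a p.
  move: pp up => /= /andP[_ pp] /andP[]; rewrite inE negb_or => /andP[xa xp] _.
  apply: path_restr => //=; rewrite /P eq_sym xa /=.
  by apply/allP => z zp; apply: contraNneq xp => <-.
have hq : path (restr e P) b q.
  move: pq uq => /= /andP[_ pq] /andP[]; rewrite inE negb_or => /andP[xb xq] _.
  apply: path_restr => //=; rewrite /P eq_sym xb /=.
  by apply/allP => z zq; apply: contraNneq xq => <-.
have c1 : connect (restr e P) a y by apply/connectP; exists p => //; rewrite lp.
have c2 : connect (restr e P) y b.
  by rewrite (sym_connect_sym (restr_sym P esym)); apply/connectP; exists q => //; rewrite lq.
have /connectP[r pr lr] := connect_trans c1 c2.
move: lr; case: (shortenP pr) => r' pr' ur' _ lr'.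
have [per' allr'] := restr_path pr'.
have ax : a != x by move: up => /= /andP[]; rewrite inE negb_or eq_sym => /andP[].
exists x; exists (a :: r'); split.
- case: r' lr' {pr' ur' per' allr'} => [/= ab|//]; by rewrite ab eqxx in neq.
- by rewrite /= per' andbT; move: pp => /= /andP[].
- move: (ur') => /= /andP[-> ->]; rewrite !andbT inE negb_or eq_sym ax /=.
  by apply/negP => /(allP allr'); rewrite /P eqxx.
- by rewrite /= -lr' esym; move: pq => /= /andP[].
Qed.

Definition pth x y := xchoose (upath_ex x y).
Lemma pthP x y : upath x (pth x y) y.
Proof. exact: (xchooseP (upath_ex x y)). Qed.
Lemma pth_eq x p y : upath x p y -> pth x y = p.
Proof. by move=> h; apply: upath_uniq (pthP x y) h. Qed.
Definition d x y := size (pth x y).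

Lemma pth_path x y : path e x (pth x y).
Proof. by case/and3P: (pthP x y). Qed.
Lemma pth_uniq x y : uniq (x :: pth x y).
Proof. by case/and3P: (pthP x y). Qed.
Lemma pth_last x y : last x (pth x y) = y.
Proof. by case/and3P: (pthP x y) => _ _ /eqP. Qed.

Lemma pth_xx x : pth x x = [::].
Proof. by apply: pth_eq; rewrite /upath /= eqxx. Qed.
Lemma d_xx x : d x x = 0.
Proof. by rewrite /d pth_xx. Qed.
Lemma d_eq0 x y : d x y = 0 -> x = y.
Proof.
rewrite /d => /size0nil h; have := pth_last x y; by rewrite h.
Qed.

Lemma pth_split x p1 p2 y : pth x y = p1 ++ p2 ->
  pth x (last x p1) = p1 /\ pth (last x p1) y = p2.
Proof.
move=> h; have := pthP x y; rewrite h => /and3P[pp uu /eqP ll].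
move: pp; rewrite cat_path => /andP[p1p p2p].
move: uu; rewrite -cat_cons cat_uniq => /and3P[u1 hn u2].
have lin : last x p1 \in x :: p1 by apply: mem_last.
have lnot : last x p1 \notin p2.
  by apply/negP => lp2; case/negP: hn; apply/hasP; exists (last x p1).
split; apply: pth_eq; rewrite /upath.
  by rewrite p1p u1 eqxx.
by rewrite p2p /= lnot u2 -last_cat ll eqxx.
Qed.

Lemma mem_pth_split x y z : z \in x :: pth x y ->
  exists p1 p2, [/\ pth x y = p1 ++ p2, pth x z = p1 & pth z y = p2].
Proof.
move=> zin.
have [p1 [p2 [h lz]]] : exists p1 p2, pth x y = p1 ++ p2 /\ last x p1 = z.
  by move: zin; case/splitPl => p1 p2 lz; exists p1, p2.
exists p1, p2; have [h1 h2] := pth_split h; rewrite lz in h1 h2; by split.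
Qed.

Lemma d_split x y z : z \in x :: pth x y -> d x y = d x z + d z y.
Proof.
by case/mem_pth_split => p1 [p2 [h h1 h2]]; rewrite /d h h1 h2 size_cat.
Qed.

Lemma pth_edge w u v : e u v ->
  pth w v = rcons (pth w u) v \/ pth w u = rcons (pth w v) u.
Proof.
move=> euv; case: (boolP (v \in w :: pth w u)) => [vin|vnot].
  right; case/mem_pth_split: vin => p1 [p2 [h h1 h2]].
  have : pth v u = [:: u].
    apply: pth_eq; rewrite /upath /= esym euv eqxx !andbT inE.
    by apply/negP => /eqP vu; rewrite vu eirr in euv.
  by rewrite h h1 h2 => ->; rewrite cats1.
left; apply: pth_eq; rewrite /upath rcons_path pth_path pth_last euv.
by rewrite -rcons_cons rcons_uniq vnot pth_uniq last_rcons eqxx.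
Qed.

Lemma d_edge w u v : e u v -> d w v = (d w u).+1 \/ d w u = (d w v).+1.
Proof. by move=> /(pth_edge w) [h|h]; [left|right]; rewrite /d h size_rcons. Qed.

Lemma d_edge_neq w u v : e u v -> d w u != d w v.
Proof. by move=> /(d_edge w) [->|->]; lia. Qed.

Lemma pth_rev x y : y :: pth y x = rev (x :: pth x y).
Proof.
set p := pth x y.
have ly : last x p = y by apply: pth_last.
have h : y :: rev (belast x p) = rev (x :: p) by rewrite [x :: p]lastI rev_rcons ly.
suff -> : pth y x = rev (belast x p) by [].
apply: pth_eq; rewrite /upath.
have -> : path e y (rev (belast x p)).
  rewrite -ly rev_path; apply: sub_path (pth_path x y) => a b; by rewrite esym.
rewrite h rev_uniq pth_uniq /=.
by rewrite -(last_cons y y) h rev_cons last_rcons eqxx.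
Qed.

Lemma d_sym x y : d x y = d y x.
Proof.
by have := congr1 size (pth_rev x y); rewrite size_rev /= => -[].
Qed.

Lemma mem_pth_rev x y z : (z \in y :: pth y x) = (z \in x :: pth x y).
Proof. by rewrite pth_rev mem_rev. Qed.

Lemma d_edge_neq' w u v : e u v -> d u w != d v w.
Proof. by rewrite d_sym [d v w]d_sym; apply: d_edge_neq. Qed.

Lemma d_eq1 x y : d x y = 1 -> e x y.
Proof.
rewrite /d; have := pth_path x y; have := pth_last x y.
by case: (pth x y) => [|a [|//]] //= -> /andP[].
Qed.

Section Aut.
Variable phi : {perm T}.
Hypothesis aut : is_aut e phi.

Lemma autE x y : e (phi x) (phi y) = e x y.
Proof. by move/forallP: aut => /(_ x) /forallP /(_ y) /eqP. Qed.

Lemma aut_pth x y : pth (phi x) (phi y) = map phi (pth x y).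
Proof.
apply: pth_eq; rewrite /upath -map_cons map_inj_uniq ?pth_uniq; last exact: perm_inj.
rewrite last_map pth_last eqxx path_map.
by rewrite andbT (@eq_path _ _ e) ?pth_path // => a b; exact: autE.
Qed.

Lemma aut_d x y : d (phi x) (phi y) = d x y.
Proof. by rewrite /d aut_pth size_map. Qed.

Lemma aut_fix x y : phi x = x -> phi y = y -> {in x :: pth x y, forall z, phi z = z}.
Proof.
move=> fx fy; have := aut_pth x y; rewrite fx fy.
move: (pth x y) => s hs z; rewrite inE => /predU1P [->//|].
elim: s hs => [//|a s IH] /= [ha hs]; rewrite inE => /predU1P [->//|].
exact: IH.
Qed.

Lemma aut_fix_edge w u v : phi w = w -> e u v -> phi u = v -> phi v = u -> False.
Proof.
move=> fw euv fu fv; have := aut_d w u; rewrite fw fu => h.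
by move: (d_edge_neq w euv); rewrite h eqxx.
Qed.

Lemma set2_fix u v : [set phi u; phi v] = [set u; v] ->
  (phi u = u /\ phi v = v) \/ (phi u = v /\ phi v = u).
Proof.
move=> h.
have hu : phi u \in [set u; v] by rewrite -h !inE eqxx.
have hv : phi v \in [set u; v] by rewrite -h !inE eqxx orbT.
move: hu hv; rewrite !inE => /orP[/eqP hu|/eqP hu] /orP[/eqP hv|/eqP hv].
- have uv : v = u by apply: (@perm_inj _ phi); rewrite hu hv.
  by left; rewrite -uv in hu *.
- by left.
- by right.
- have uv : u = v by apply: (@perm_inj _ phi); rewrite hu hv.
  by left; rewrite uv in hu *.
Qed.

Lemma fix_edge w u v : phi w = w -> e u v -> [set phi u; phi v] = [set u; v] ->
  phi u = u /\ phi v = v.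
Proof.
move=> fw euv /set2_fix [//|[fu fv]]; case: (aut_fix_edge fw euv fu fv).
Qed.
End Aut.

Definition ecc v := \max_(w : T) d w v.
Definition central v := [forall w, ecc v <= ecc w].

Lemma ecc_aut phi v : is_aut e phi -> ecc (phi v) = ecc v.
Proof.
move=> aut; rewrite /ecc (reindex_inj (@perm_inj _ phi)) /=.
by apply: eq_bigr => w _; apply: aut_d.
Qed.

Lemma central_aut phi v : is_aut e phi -> central (phi v) = central v.
Proof. by move=> aut; rewrite /central ecc_aut. Qed.

Lemma between w x y z : z \in x :: pth x y -> z != x -> z != y ->
  d w z < maxn (d w x) (d w y).
Proof.
move=> zin zx zy.
set W := (w :: pth w x) ++ (w :: pth w y).
set P := fun u => u \in W.
have c1 : connect (restr e P) w x.
  apply/connectP; exists (pth w x); last by rewrite pth_last.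
  apply: path_restr; first exact: pth_path.
  by apply/allP => u uin; rewrite /P /W mem_cat uin.
have c2 : connect (restr e P) w y.
  apply/connectP; exists (pth w y); last by rewrite pth_last.
  apply: path_restr; first exact: pth_path.
  by apply/allP => u uin; rewrite /P /W mem_cat uin orbT.
have c3 : connect (restr e P) x y.
  apply: connect_trans c2.
  by rewrite (sym_connect_sym (restr_sym P esym)).
have /connectP[r pr lr] := c3.
move: lr; case: (shortenP pr) => r' pr' ur' _ lr'.
have [per' allr'] := restr_path pr'.
have hr : pth x y = r' by apply: pth_eq; rewrite /upath per' ur' -lr' eqxx.
move: zin; rewrite hr inE (negbTE zx) /= => /(allP allr').
rewrite /P /W mem_cat => /orP[] zin.
  rewrite (d_split zin); apply: leq_trans (leq_maxl _ _).
  rewrite -addn1 leq_add2l lt0n; apply/negP => /eqP /d_eq0 /eqP.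
  by rewrite (negbTE zx).
rewrite (d_split zin); apply: leq_trans (leq_maxr _ _).
rewrite -addn1 leq_add2l lt0n; apply/negP => /eqP /d_eq0 /eqP.
by rewrite (negbTE zy).
Qed.

Lemma lb a b : d a b <= ecc b.
Proof. by rewrite /ecc; apply: (@leq_bigmax _ (fun w => d w b) a). Qed.

Lemma central_adj x y : central x -> central y -> x != y -> e x y.
Proof.
move=> cx cy xy.
have exy : ecc x = ecc y.
  by apply/eqP; rewrite eqn_leq (forallP cx y) (forallP cy x).
have := pth_uniq x y; have := pth_last x y; have := pth_path x y.
have := d_eq1 (x := x) (y := y); rewrite /d.
case hp: (pth x y) => [|z [|b q]] //.
- by move=> _ _ /= yx; rewrite yx eqxx in xy.
- by move=> ->.
move=> _ _ /= ly /and3P[]; rewrite !inE !negb_or => /and3P[xz xb xq] /andP[zb zq] _.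
have zin : z \in x :: pth x y by rewrite hp !inE eqxx orbT.
have zy : z != y.
  rewrite -ly; apply/negP => /eqP zl.
  have : last b q \in b :: q by apply: mem_last.
  by rewrite -zl inE (negbTE zb) (negbTE zq).
have H : forall w, d w z < ecc x.
  move=> w; have zx : z != x by rewrite eq_sym.
  apply: leq_trans (between w zin zx zy) _.
  by rewrite geq_max {2}exy !lb.
have : ecc z < ecc x.
  move: H; case: (ecc x) => [/(_ z)//|n H]; rewrite ltnS.
  by apply/bigmax_leqP => w _; rewrite -ltnS; apply: H.
by rewrite ltnNge (forallP cx z).
Qed.

Lemma central3 a b c : central a -> central b -> central c ->
  a != b -> b != c -> a != c -> False.
Proof.
move=> ca cb cc ab bc ac; apply: enocyc; exists a; exists [:: b; c]; split => //.
- by rewrite /= !central_adj.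
- by rewrite /= !inE negb_or ab ac bc.
- by rewrite /= central_adj // eq_sym.
Qed.

Lemma root_spec (x0 : T) : exists r,
  (forall phi, is_aut e phi -> phi r = r) \/
  exists r', [/\ e r r', r' != r & forall phi, is_aut e phi ->
     (phi r = r /\ phi r' = r') \/ (phi r = r' /\ phi r' = r)].
Proof.
have : central [arg min_(c < x0) ecc c].
  by case: arg_minnP => // c _ H; apply/forallP => w; apply: H.
move: [arg min_(c < x0) ecc c] => c cc.
exists c.
case: (pickP [pred c' | central c' & c' != c]) => [c' /andP[cc' nc]|none].
  right; exists c'; split => //; first by apply: central_adj; rewrite // eq_sym.
  have in2 : forall a, central a -> a = c \/ a = c'.
    move=> a ca; case: (eqVneq a c) => [|ac]; first by left.
    case: (eqVneq a c') => [|ac']; first by right.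
    by case: (central3 ca cc cc' ac _ ac'); rewrite eq_sym.
  move=> phi aut.
  have c1 : central (phi c) by rewrite central_aut.
  have c2 : central (phi c') by rewrite central_aut.
  have ne : phi c != phi c' by rewrite (inj_eq (@perm_inj _ phi)) eq_sym.
  case: (in2 _ c1) => h1; case: (in2 _ c2) => h2; rewrite h1 h2 in ne.
  - by rewrite eqxx in ne.
  - by left.
  - by right.
  - by rewrite eqxx in ne.
left => phi aut; have := none (phi c); rewrite /= central_aut // cc /=.
by move/negbFE/eqP.
Qed.

Lemma d_adj x y : e x y -> d x y = 1.
Proof.
move=> exy; rewrite /d (@pth_eq x [:: y] y) //.
rewrite /upath /= exy eqxx !andbT inE; apply/negP => /eqP xy.
by rewrite xy eirr in exy.
Qed.

Lemma swap_core phi x y u v : is_aut e phi -> e x y -> phi x = y -> phi y = x ->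
  e u v -> phi u = v -> phi v = u -> pth x v = rcons (pth x u) v -> u = x.
Proof.
move=> aut exy fx fy euv fu fv hp.
have dxv : d x v = (d x u).+1 by rewrite /d hp size_rcons.
have dyv : d y v = d x u by rewrite -(aut_d aut x u) fx fu.
have dyu : d y u = d x v by rewrite -(aut_d aut x v) fx fv.
have yin : y \in x :: pth x v.
  rewrite -mem_pth_rev.
  have eyx : e y x by rewrite esym.
  case: (pth_edge v eyx) => hv.
    rewrite hv -rcons_cons mem_rcons !inE; apply/orP; right.
    by move: (mem_last v (pth v y)); rewrite pth_last.
  have : d v y = (d v x).+1 by rewrite /d hv size_rcons.
  by rewrite d_sym [d v x]d_sym dyv dxv; lia.
move: yin; rewrite hp -rcons_cons mem_rcons inE => /orP[/eqP yv|yin].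
  by move: dyv; rewrite yv d_xx => h; have -> := d_eq0 (Logic.eq_sym h).
have := d_split yin; rewrite (d_adj exy) dyu dxv; lia.
Qed.

Lemma swap_lemma phi x y u v : is_aut e phi -> e x y -> phi x = y -> phi y = x ->
  e u v -> phi u = v -> phi v = u -> (u == x) || (u == y).
Proof.
move=> aut exy fx fy euv fu fv.
case: (pth_edge x euv) => hp.
  by rewrite (swap_core aut exy fx fy euv fu fv hp) eqxx.
have evu : e v u by rewrite esym.
have vx := swap_core aut exy fx fy evu fv fu hp.
by rewrite -fv vx fx eqxx orbT.
Qed.

Lemma nbr r r' : e r r' -> 2 < #|T| ->
  exists w, (e r w && (w != r')) || (e r' w && (w != r)).
Proof.
move=> err' n3.
have : ~~ ([set: T] \subset [set r; r']).
  apply/negP => /subset_leq_card; rewrite cardsT cards2 => h.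
  have : #|T| <= 2 by apply: leq_trans h _; case: (r != r').
  by rewrite leqNgt n3.
case/subsetPn => z _; rewrite !inE negb_or => /andP[zr zr'].
have := pth_path r z; have := pth_uniq r z; have := pth_last r z.
case: (pth r z) => [/= rz|a q].
  by rewrite rz eqxx in zr.
move=> /= lz /andP[rn uq] /andP[era pq].
case: (eqVneq a r') => [ar'|ar']; last by exists a; rewrite era ar'.
subst a; case: q lz rn uq pq => [/= rz|b q] /=.
  by rewrite rz eqxx in zr'.
move=> _; rewrite !inE !negb_or => /and3P[_ rb _] _ /andP[er'b _].
by exists b; rewrite er'b (eq_sym b r) rb /= orbT.
Qed.

Lemma vdetP (S : {set T}) phi : vdet_set e S -> is_aut e phi ->
  (forall x, x \in S -> phi x = x) -> phi = 1%g.
Proof.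
move=> /forallP /(_ phi) /implyP h aut fx; apply/eqP/h.
by rewrite aut /=; apply/forall_inP => x xS; rewrite fx.
Qed.

Lemma vdetI (S : {set T}) : (forall phi, is_aut e phi -> (forall x, x \in S -> phi x = x) -> phi = 1%g) ->
  vdet_set e S.
Proof.
move=> h; apply/forallP => phi; apply/implyP => /andP[aut /forall_inP fx].
by apply/eqP/h => // x /fx /eqP.
Qed.

Lemma edetP (D : {set {set T}}) phi : edet_set e D -> is_aut e phi ->
  (forall u v, [set u; v] \in D -> [set phi u; phi v] = [set u; v]) -> phi = 1%g.
Proof.
move=> /andP[_ /forallP /(_ phi) /implyP h] aut fx; apply/eqP/h.
rewrite aut /=; apply/forallP => u; apply/forallP => v; apply/implyP => /fx ->.
by rewrite eqxx.
Qed.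

Lemma edetI (D : {set {set T}}) : (forall A, A \in D -> is_edge e A) ->
  (forall phi, is_aut e phi ->
    (forall u v, [set u; v] \in D -> [set phi u; phi v] = [set u; v]) -> phi = 1%g) ->
  edet_set e D.
Proof.
move=> he h; apply/andP; split; first by apply/forall_inP.
apply/forallP => phi; apply/implyP => /andP[aut /forallP fx].
apply/eqP/h => // u v uvD.
by move: (fx u) => /forallP /(_ v) /implyP /(_ uvD) /eqP.
Qed.

Lemma is_edgeP (A : {set T}) : is_edge e A -> exists u v, e u v /\ A = [set u; v].
Proof. by move=> /existsP[u /existsP[v /andP[euv /eqP ->]]]; exists u, v. Qed.

Lemma fixed2 (phi : {perm T}) (u v x : T) : phi u = u -> phi v = v -> x \in [set u; v] -> phi x = x.
Proof. by move=> fu fv; rewrite !inE => /orP[] /eqP ->. Qed.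

Definition par r s := odflt r [pick u | e u s && (d r u < d r s)].

Lemma parP r s : s != r -> e (par r s) s /\ d r (par r s) < d r s.
Proof.
move=> sr.
have ne : pth r s != [::].
  by apply/negP => /eqP h; have := pth_last r s; rewrite h /= => rs; rewrite rs eqxx in sr.
have [p [a h]] : exists p a, pth r s = rcons p a.
  by move: (pth r s) ne; case/lastP => [//|p a _]; exists p, a.
have las : a = s by have := pth_last r s; rewrite h last_rcons.
subst a.
rewrite -cats1 in h; have [h1 _] := pth_split h.
rewrite /par; case: pickP => [u /andP[eus lt] //|none].
have := none (last r p); rewrite /= /d h h1 size_cat addn1 ltnSn andbT.
have := pth_path r s; rewrite h cat_path /= => /andP[_ /andP[-> _]] //.
Qed.

Lemma detA (S : {set T}) : 2 < #|T| -> vdet_set e S ->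
  exists D : {set {set T}}, edet_set e D && (#|D| <= #|S|).
Proof.
move=> n3 vS.
have /card_gt0P [x0 _] : 0 < #|T| by apply: leq_ltn_trans n3.
have [r spec] := root_spec x0.
pose g s := [set s; par r s].
have gedge : forall A, A \in g @: (S :\ r) -> is_edge e A.
  move=> A /imsetP[s /setD1P[sr sS] ->]; have [epar _] := parP sr.
  apply/existsP; exists (par r s); apply/existsP; exists s.
  by rewrite epar /g setUC eqxx.
have gcard : #|g @: (S :\ r)| <= #|S|.
  by apply: leq_trans (leq_imset_card _ _) (subset_leq_card (subD1set S r)).
have gfix : forall phi, is_aut e phi -> phi r = r ->
    (forall u v, [set u; v] \in g @: (S :\ r) -> [set phi u; phi v] = [set u; v]) ->
    phi = 1%g.
  move=> phi aut fr ef; apply: (vdetP vS aut) => x xS.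
  case: (eqVneq x r) => [->//|xr].
  have [epar _] := parP xr.
  have h := ef x (par r x) (imset_f g (_ : x \in S :\ r)).
  have exp : e x (par r x) by rewrite esym.
  by case: (fix_edge aut fr exp (h _)) => //; rewrite in_setD1 xr xS.
case: spec => [uni|[r' [err' nr fix2]]].
  exists (g @: (S :\ r)); rewrite gcard andbT.
  by apply: edetI => // phi aut ef; apply: gfix => //; apply: uni.
case: (boolP [exists s in S, (s != r) && (s != r')]).
  move=> /exists_inP[s0 s0S /andP[s0r s0r']].
  exists (g @: (S :\ r)); rewrite gcard andbT.
  apply: edetI => // phi aut ef; apply: gfix => //.
  case: (fix2 phi aut) => [[]//|[fr fr']]; exfalso.
  have [epar _] := parP s0r.
  have h := ef s0 (par r s0) (imset_f g (_ : s0 \in S :\ r)).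
  case: (set2_fix (h _)) => [|[fs fp]|[fs fp]]; first by rewrite in_setD1 s0r s0S.
    have := aut_d aut r s0; rewrite fr fs => h2.
    by move: (d_edge_neq' s0 err'); rewrite h2 eqxx.
  have exp : e s0 (par r s0) by rewrite esym.
  by move: (swap_lemma aut err' fr fr' exp fs fp); rewrite (negbTE s0r) (negbTE s0r').
move=> none.
have Ssub : forall x, x \in S -> x = r \/ x = r'.
  move=> x xS; case: (eqVneq x r) => [|xr]; first by left.
  case: (eqVneq x r') => [|xr']; first by right.
  by case/negP: none; apply/exists_inP; exists x => //; rewrite xr xr'.
case: (eqVneq S set0) => [S0|Sn0].
  exists set0; rewrite cards0 leq0n andbT; apply: edetI => [A|phi aut _]; first by rewrite inE.
  by apply: (vdetP vS aut) => x; rewrite S0 inE.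
have S1 : 1 <= #|S| by rewrite card_gt0.
have [w] := nbr err' n3.
case/orP => /andP[erw wr'].
  exists [set [set r; w]]; rewrite cards1 S1 andbT; apply: edetI.
    move=> A; rewrite inE => /eqP ->; apply/existsP; exists r; apply/existsP; exists w.
    by rewrite erw eqxx.
  move=> phi aut ef; have h := ef r w (set11 _).
  case: (fix2 phi aut) => [[fr fr']|[fr fr']].
    by apply: (vdetP vS aut) => x /Ssub [] ->.
  have : phi r \in [set r; w] by rewrite -h !inE eqxx.
  rewrite fr !inE (negbTE nr) /= => /eqP wr; by rewrite wr eqxx in wr'.
exists [set [set r'; w]]; rewrite cards1 S1 andbT; apply: edetI.
  move=> A; rewrite inE => /eqP ->; apply/existsP; exists r'; apply/existsP; exists w.
  by rewrite erw eqxx.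
move=> phi aut ef; have h := ef r' w (set11 _).
case: (fix2 phi aut) => [[fr fr']|[fr fr']].
  by apply: (vdetP vS aut) => x /Ssub [] ->.
have : phi r' \in [set r'; w] by rewrite -h !inE eqxx.
rewrite fr' !inE eq_sym (negbTE nr) /= => /eqP wr; by rewrite wr eqxx in wr'.
Qed.

Lemma detB (D : {set {set T}}) : 2 < #|T| -> edet_set e D ->
  exists S : {set T}, vdet_set e S && (#|S| <= #|D|).
Proof.
move=> n3 eD.
case: (eqVneq D set0) => [D0|Dn0].
  exists set0; rewrite cards0 leq0n andbT; apply: vdetI => phi aut _.
  by apply: (edetP eD aut) => u v; rewrite D0 inE.
have /card_gt0P [x0 _] : 0 < #|T| by apply: leq_ltn_trans n3.
have [r spec] := root_spec x0.
pose f (A : {set T}) := odflt r [pick v in A | [exists u in A, d r u < d r v]].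
have kf : forall u v, e u v -> pth r v = rcons (pth r u) v ->
    f [set u; v] = v /\ u \in r :: pth r v.
  move=> u v euv hp.
  have dv : d r v = (d r u).+1 by rewrite /d hp size_rcons.
  split; last first.
    rewrite hp -rcons_cons mem_rcons inE; apply/orP; right.
    by move: (mem_last r (pth r u)); rewrite pth_last.
  rewrite /f; case: pickP => [v' /andP[v'in /exists_inP[u' u'in lt]]|none] /=.
    move: v'in u'in lt; rewrite !inE => /orP[]/eqP -> // /orP[]/eqP ->.
      by rewrite ltnn.
    by rewrite dv ltnNge leqnSn.
  have := none v; rewrite /= !inE eqxx orbT /=.
  move=> h; suff : [exists u0 in [set u; v], d r u0 < d r v] by rewrite h.
  by apply/exists_inP; exists u; rewrite ?inE ?eqxx // dv.
have key : forall A, A \in D -> exists u v,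
    [/\ A = [set u; v], f A = v & u \in r :: pth r v].
  move=> A AD; have [u0 [v0 [euv ->]]] := is_edgeP (forall_inP (proj1 (andP eD)) A AD).
  case: (pth_edge r euv) => hp.
    by have [h1 h2] := kf _ _ euv hp; exists u0, v0.
  have evu : e v0 u0 by rewrite esym.
  by have [h1 h2] := kf _ _ evu hp; exists v0, u0; rewrite setUC.
exists (f @: D); rewrite leq_imset_card andbT.
apply: vdetI => phi aut fS.
have fr : phi r = r.
  case: spec => [uni|[r' [err' nr fix2]]]; first exact: uni.
  case: (fix2 phi aut) => [[]//|[fr fr']]; exfalso.
  have [A AD] := set0Pn _ Dn0.
  have [u [v [_ fA _]]] := key A AD.
  have fv : phi v = v by apply: fS; rewrite -fA imset_f.
  have := aut_d aut r v; rewrite fr fv => h2.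
  by move: (d_edge_neq' v err'); rewrite h2 eqxx.
apply: (edetP eD aut) => u0 v0 AD.
have [u [v [hA fA uin]]] := key _ AD.
have fv : phi v = v by apply: fS; rewrite -fA imset_f.
have fu : phi u = u by apply: (aut_fix aut fr fv uin).
have hu0 : u0 \in [set u; v] by rewrite -hA !inE eqxx.
have hv0 : v0 \in [set u; v] by rewrite -hA !inE eqxx orbT.
by rewrite (fixed2 fu fv hu0) (fixed2 fu fv hv0).
Qed.
End Tree.

Lemma bigmin_cases (I : finType) (P : pred I) (F : I -> nat) x :
  \big[minn/x]_(i | P i) F i = x \/
  exists2 i, P i & \big[minn/x]_(i | P i) F i = F i.
Proof.
apply: (big_ind (fun v => v = x \/ exists2 i, P i & v = F i)).
- by left.
- move=> a b ha hb; case: (leqP a b) => h.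
    by [].
  by [].
- by move=> i Pi; right; exists i.
Qed.

Lemma bigmin_le (I : finType) (P : pred I) (F : I -> nat) x i :
  P i -> \big[minn/x]_(j | P j) F j <= F i.
Proof.
move=> Pi; elim: (index_enum I) (mem_index_enum i) => [//|j s IH].
rewrite big_cons inE => /orP[/eqP <-|/IH h]; first by rewrite Pi geq_minl.
by case: (P j) => //; apply: leq_trans (geq_minr _ _) h.
Qed.

Lemma bigmin_idx (I : finType) (P : pred I) (F : I -> nat) x :
  \big[minn/x]_(j | P j) F j <= x.
Proof. by elim/big_rec: _ => // i v _ h; apply: leq_trans (geq_minr _ _) h. Qed.

Theorem theorem10 (T : finType) (e : rel T) :
  is_tree e -> 3 <= #|T| -> det_number e = det_index e.
Proof.
move=> [[esym eirr] [econn enocyc]] n3.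
apply/eqP; rewrite eqn_leq; apply/andP; split.
  rewrite /det_index; case: (bigmin_cases (edet_set e) (fun D : {set {set T}} => #|D|) #|{set T}|) => [->|[D eD ->]].
    apply: leq_trans (bigmin_idx _ _ _) _.
    rewrite -(card_imset _ (@set1_inj T)); exact: max_card.
  have [S /andP[vS le]] := detB esym eirr econn enocyc n3 eD.
  by apply: leq_trans le; apply: bigmin_le.
rewrite /det_number; case: (bigmin_cases (vdet_set e) (fun S : {set T} => #|S|) #|T|) => [->|[S vS ->]].
  have vT : vdet_set e [set: T].
    apply: vdetI => phi _ fx; apply/permP => x; rewrite perm1; apply: fx; exact: in_setT.
  have [D /andP[eD le]] := detA esym eirr econn enocyc n3 vT.
  by apply: leq_trans (bigmin_le _ _ eD) _; rewrite -cardsT.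
have [D /andP[eD le]] := detA esym eirr econn enocyc n3 vS.
by apply: leq_trans (bigmin_le _ _ eD) le.
Qed.
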